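(* Let $G$ be a graph on $K$ vertices and let $m$ satisfy $3\le m\le K$. If the average degree of $G$ is at least $m$, then $G$ contains a connected-matching on at least $m$ vertices.
   Context: A matching is a set of pairwise vertex-disjoint edges; its number of vertices is twice its number of edges. A connected-matching is a matching all of whose edges lie in the same connected component of $G$. *)

(* Defs.v *)
(* A finite simple graph is a symmetric irreflexive relation
   [e : rel T] on a finite type [T]; its vertex count is #|T|. *)
From mathcomp Require Import all_boot.
Set Implicit Arguments. Unset Strict Implicit. Unset Printing Implicit Defensive.

Definition deg (T : finType) (e : rel T) (x : T) : nat := #|[set y | e x y]|.

Definition match_vertices (T : finType) (M : seq (T * T)) : seq T :=
  flatten [seq [:: p.1; p.2] | p <- M].

(* a matching: every pair is an edge of G, and all endpoints are pairwise
   distinct (so the edges are pairwise vertex-disjoint, and no edge is listed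
   twice); its number of vertices is 2 * size M. *)
Definition is_matching (T : finType) (e : rel T) (M : seq (T * T)) : Prop :=
  all (fun p => e p.1 p.2) M /\ uniq (match_vertices M).

(* a connected-matching: a matching all of whose edges lie in the same
   connected component of G (connect e = reflexive-transitive closure). *)
Definition is_connected_matching (T : finType) (e : rel T) (M : seq (T * T)) : Prop :=
  is_matching e M /\
  forall p q, p \in M -> q \in M -> connect e p.1 q.1.

(* Main.v *)
Require Import Defs.
From mathcomp Require Import all_boot.
From mathcomp Require Import zify.
From Stdlib Require Import Classical.
Set Implicit Arguments. Unset Strict Implicit. Unset Printing Implicit Defensive.

Section S.
Variables (T : finType) (e : rel T).
Hypotheses (esym : symmetric e) (eirr : irreflexive e).

Local Notation mv := (@match_vertices T).

Lemma mv_cons p s : mv (p :: s) = p.1 :: p.2 :: mv s.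
Proof. by []. Qed.

Lemma mv_cat s1 s2 : mv (s1 ++ s2) = mv s1 ++ mv s2.
Proof. by rewrite /match_vertices map_cat flatten_cat. Qed.

Lemma size_mv s : size (mv s) = 2 * size s.
Proof. elim: s => [|p s IH] //=; rewrite IH; lia. Qed.

Definition good (C : {set T}) M := is_matching e M /\ {subset mv M <= C}.

Lemma good_size C M : good C M -> size M <= #|T|.
Proof.
case=> [[_ U] _]. have := max_card (mem (mv M)).
rewrite (card_uniqP U) size_mv; lia.
Qed.

Lemma aug1 C M x y : good C M -> x \in C -> y \in C -> x \notin mv M -> y \notin mv M ->
  e x y -> good C ((x, y) :: M).
Proof.
case=> [[Ha Hu] Hs] xC yC xM yM exy; split; [split|].
- by rewrite /= exy.
- rewrite mv_cons /= inE negb_or xM yM Hu andbT /= andbT.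
  by apply/eqP=> E; move: exy; rewrite E eirr.
- by move=> z; rewrite mv_cons !inE => /or3P [/eqP->|/eqP->|/Hs].
Qed.

Lemma aug2 C M p a b : good C M -> p \in M -> a \in C -> b \in C ->
  a \notin mv M -> b \notin mv M -> a != b -> e p.1 a -> e p.2 b ->
  exists M', good C M' /\ size M' = (size M).+1.
Proof.
case=> [[Ha Hu] Hs] pM aC bC aM bM ab ea eb.
case/splitPr: pM Ha Hu Hs aM bM => M1 M2 Ha Hu Hs aM bM.
exists (M1 ++ (a, p.1) :: (p.2, b) :: M2).
have Hp : perm_eq (mv (M1 ++ (a, p.1) :: (p.2, b) :: M2)) (a :: b :: mv (M1 ++ p :: M2)).
  rewrite !mv_cat !mv_cons /=.
  by apply/permP => q; rewrite !count_cat /= count_cat /=; lia.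
split; last by rewrite !size_cat /= addnS.
split; [split|].
- move: Ha; rewrite !all_cat /= => /andP [-> /andP [_ ->]].
  by rewrite esym ea eb.
- by rewrite (perm_uniq Hp) /= inE negb_or ab aM bM Hu.
- move=> z; rewrite (perm_mem Hp) !inE => /or3P [/eqP->|/eqP->|/Hs] //.
Qed.

Lemma card_sum (A : {set T}) (P : pred T) : #|A :&: [set y | P y]| = \sum_(y in A) P y.
Proof.
rewrite -sum1_card [LHS]big_mkcond [RHS]big_mkcond; apply: eq_bigr => y _.
by rewrite !inE; case: (y \in A); case: (P y).
Qed.

Lemma sum_mv (g : T -> nat) M : \sum_(y <- mv M) g y = \sum_(p <- M) (g p.1 + g p.2).
Proof. elim: M => [|p M IH]; first by rewrite !big_nil. by rewrite mv_cons !big_cons IH addnA. Qed.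

Lemma sum_bound (h : T * T -> nat) M c : (forall p, p \in M -> h p <= c) ->
  \sum_(p <- M) h p <= size M * c.
Proof.
elim: M => [|p M IH] H; first by rewrite big_nil.
rewrite big_cons mulSn leq_add ?H ?mem_head // IH // => q qM.
by apply: H; rewrite inE qM orbT.
Qed.

Variable r : T.
Let C := [set x | connect e r x].

Lemma nbrC x y : x \in C -> e x y -> y \in C.
Proof. rewrite !inE => H exy; apply: connect_trans H (connect1 exy). Qed.

Lemma count_main M : good C M -> (forall M', good C M' -> size M' <= size M) ->
  \sum_(x in C) deg e x <= size M * (2 * #|C|).
Proof.
move=> gM Hmax.
set N := fun x => [set y | e x y].
set V := [set x in mv M].
set U := C :\: V.
have VC : V \subset C by apply/subsetP => x; rewrite inE; case: gM => _; apply.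
have NC x : x \in C -> N x \subset C by move=> xC; apply/subsetP => y; rewrite inE; apply: nbrC.
have degsplit x : deg e x = #|N x :&: V| + #|N x :\: V| by rewrite cardsID.
have U0 x : x \in U -> #|N x :\: V| = 0.
  move=> /setDP [xC]; rewrite inE => xV; apply/eqP; rewrite cards_eq0; apply/eqP/setP => y.
  rewrite !inE; apply/negbTE/negP => /andP [yV exy].
  have := Hmax _ (aug1 gM xC (nbrC xC exy) xV yV exy); rewrite /=; lia.
have cross y : y \in V -> #|N y :\: V| = \sum_(x in U) e y x.
  move=> yV; rewrite -card_sum; apply: eq_card => x.
  have := nbrC (subsetP VC _ yV); rewrite !inE.
  move=> H; case exy: (e y x); rewrite ?andbF // !andbT.
  by have := H x exy; rewrite inE => ->; rewrite andbT.
have cross2 x : #|N x :&: V| = \sum_(y in V) e x y by rewrite setIC card_sum.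
have -> : \sum_(x in C) deg e x = \sum_(y in V) (#|N y :&: V| + 2 * #|N y :\: V|).
  rewrite (eq_bigr _ (fun x _ => degsplit x)) (big_setID V) /= (setIidPr VC).
  have -> : \sum_(x in U) (#|N x :&: V| + #|N x :\: V|) = \sum_(y in V) #|N y :\: V|.
    rewrite (eq_bigr (fun x => \sum_(y in V) e x y)); last first.
      by move=> x xU; rewrite U0 // addn0 cross2.
    rewrite exchange_big /=; apply: eq_bigr => y yV; rewrite cross //.
    by apply: eq_bigr => x _; rewrite esym.
  by rewrite -big_split /=; apply: eq_bigr => y _; lia.
have uM : uniq (mv M) by case: gM => [[]].
rewrite (_ : \sum_(y in V) _ = \sum_(y <- mv M) (#|N y :&: V| + 2 * #|N y :\: V|)); last first.
  by rewrite big_uniq //; apply: eq_bigl => y; rewrite inE.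
rewrite sum_mv; apply: sum_bound => p pM.
have uV : p.1 \in V by rewrite inE /match_vertices; apply/flattenP; exists [:: p.1; p.2]; [apply/mapP; exists p|rewrite mem_head].
have vV : p.2 \in V by rewrite inE /match_vertices; apply/flattenP; exists [:: p.1; p.2]; [apply/mapP; exists p|rewrite inE mem_head orbT].
have aB x : x \in V -> #|N x :&: V| <= #|V| - 1.
  move=> xV; rewrite (cardsD1 x V) xV add1n subSS subn0; apply: subset_leq_card.
  apply/subsetP => y; rewrite !inE => /andP [exy ->]; rewrite andbT.
  by apply/eqP => E; move: exy; rewrite E eirr.
have bB : #|N p.1 :\: V| + #|N p.2 :\: V| <= #|U| + 1.
  rewrite -cardsUI; apply: leq_add.
    apply: subset_leq_card; apply/subsetP => y /setUP [] /setDP [yN yV]; apply/setDP; split=> //;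
    move: yN; rewrite inE; apply: nbrC; exact: (subsetP VC).
  rewrite leqNgt; apply/negP => /card_gt1P [x [y [xI yI xy]]].
  move: xI yI => /setIP [/setDP [ex1 xV1] /setDP [ex2 _]] /setIP [/setDP [ey1 yV1] /setDP [ey2 _]].
  rewrite inE in ex1; rewrite inE in ey2; rewrite inE in xV1; rewrite inE in yV1.
  have xC : x \in C by apply: nbrC ex1; apply: (subsetP VC).
  have yC : y \in C by apply: nbrC ey2; apply: (subsetP VC).
  have [M' [gM' sM']] := aug2 gM pM xC yC xV1 yV1 xy ex1 ey2.
  by have := Hmax _ gM'; rewrite sM' ltnn.
have cC : #|C| = #|V| + #|U| by rewrite -(cardsID V C) (setIidPr VC).
have := aB _ uV; have := aB _ vV; have : 0 < #|V| by apply/card_gt0P; exists p.1.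
rewrite cC; lia.
Qed.
End S.

Lemma mem_mv1 (T : finType) (p : T * T) M : p \in M -> p.1 \in match_vertices M.
Proof. move=> pM; apply/flattenP; exists [:: p.1; p.2]; [apply/mapP; exists p|rewrite mem_head] => //. Qed.

Lemma exists_max (A : Type) (P : seq A -> Prop) (B : nat) : P [::] ->
  (forall M, P M -> size M <= B) ->
  exists M, P M /\ forall M', P M' -> size M' <= size M.
Proof.
move=> P0 HB; apply: NNPP => Hn.
have step : forall M, P M -> exists M', P M' /\ size M < size M'.
  move=> M PM; apply: NNPP => H2; apply: Hn; exists M; split=> // M' PM'.
  by rewrite leqNgt; apply/negP => lt; apply: H2; exists M'.
have : forall k, exists M, P M /\ k <= size M.
  elim=> [|k [M [PM kM]]]; first by exists [::].
  have [M' [PM' lt]] := step M PM; exists M'; split=> //; exact: leq_ltn_trans kM lt.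
move/(_ B.+1) => [M [PM le]]; have := HB M PM; lia.
Qed.

Lemma pick_class (J : finType) (a b : J -> nat) : (forall j, b j = 0 -> a j = 0) ->
  0 < \sum_j b j -> \sum_j b j <= \sum_j a j -> exists j, 0 < b j /\ b j <= a j.
Proof.
move=> H0 Hpos Hle.
case: (boolP [exists j, (0 < b j) && (b j <= a j)]) => [/existsP [j /andP [??]]|Hn].
  by exists j.
have H j : a j + (0 < b j) <= b j.
  move: Hn; rewrite negb_exists => /forallP /(_ j).
  case: (posnP (b j)) => [bj|bj] /=; first by rewrite bj H0.
  by rewrite -ltnNge addn1.
have : \sum_j (a j + (0 < b j)) <= \sum_j b j by apply: leq_sum => j _; apply: H.
rewrite big_split /=.
have : 0 < \sum_j (0 < b j : nat).
  case: (boolP [exists j, 0 < b j]) => [/existsP [j bj]|Hn2].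
    by rewrite (bigD1 j) //= bj.
  move: Hpos; rewrite big1 // => j _; move: Hn2; rewrite negb_exists => /forallP /(_ j).
  by case: (b j).
lia.
Qed.

Theorem corollary7p9 (T : finType) (e : rel T) (K m : nat) :
  symmetric e -> irreflexive e -> #|T| = K -> 3 <= m <= K ->
  (* average degree (\sum_x deg x) / K is at least m *)
  m * K <= \sum_(x : T) deg e x ->
  exists M : seq (T * T), is_connected_matching e M /\ m <= 2 * size M.
Proof.
move=> esym eirr HK /andP [m3 mK] Hsum.
have cs := sym_connect_sym esym.
have Hs : \sum_(x : T) m <= \sum_(x : T) deg e x.
  by rewrite sum_nat_const cardT -cardE HK mulnC.
have Hp : 0 < \sum_(x : T) m.
  rewrite sum_nat_const cardT -cardE HK; nia.
rewrite (partition_big (root e) xpredT) // [X in _ <= X](partition_big (root e) xpredT) //= in Hs.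
rewrite (partition_big (root e) xpredT) //= in Hp.
have [|j [bj ab]] := @pick_class _ _ _ _ Hp Hs.
- move=> j Hb; apply: big1 => x Px; move: Hb; rewrite (bigD1 x) //=; lia.
case: (pickP (fun x => root e x == j)) => [x0 Hx0|none]; last first.
  by move: bj; rewrite big1 // => x; rewrite none.
set C := [set x | connect e x0 x].
have eqC x : (root e x == j) = (x \in C).
  by rewrite inE /= -(eqP Hx0); apply/eqP/rootP => // /cs.
rewrite (eq_bigl _ _ eqC) [X in _ <= X](eq_bigl _ _ eqC) sum_nat_const in ab.
have g0 : good e C [::] by split=> //.
have [M [gM Hmax]] := @exists_max _ (good e C) #|T| g0 (@good_size _ e C).
exists M; split.
  case: gM => Hm Hs2; split=> // p q pM qM.
  have := Hs2 _ (mem_mv1 pM); have := Hs2 _ (mem_mv1 qM); rewrite !inE => Hq Hp2.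
  by apply: connect_trans Hq; rewrite cs.
have := count_main esym eirr gM Hmax.
move=> H; have Hle := leq_trans ab H.
have C0 : 0 < #|C| by apply/card_gt0P; exists x0; rewrite inE connect0.
by rewrite -(leq_pmul2r C0) [m * _]mulnC (mulnC 2) -mulnA.
Qed.
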